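(* Fix reals $\mu>\nu>0$, reals $Q_\mu,Q_\nu,E_\mu,E_\nu$, and $Y_0\in[0,1]$. Let $S$ be the set of all configurations $(Y_i,e_i)_{i\ge 1}$ with $Y_i,e_i\in[0,1]$ for all $i\ge1$ which, together with the given $Y_0$ and $e_0=1/2$, satisfy the decoy-state constraints (DS). Define $$K=\frac{1}{\mu}e^{\mu}E_\mu Q_\mu-\frac{1}{\nu}e^{\nu}E_\nu Q_\nu+\frac{\mu-\nu}{2\mu\nu}Y_0,\qquad \beta_i=\frac{\mu^{i-1}-\nu^{i-1}}{i!}\ (i\ge3),$$ assume $0\le K<\sum_{i\ge 3}\beta_i$, and let $k_0$ be the smallest integer $\ge 3$ with $\sum_{i=k_0}^\infty\beta_i\le K$; assume $k_0\ge 4$. Define a configuration $(Y_i^\circ,e_i^\circ)_{i\ge1}$ by: $e_i^\circ=1$ for all $i\ge3$; $Y_i^\circ=0$ for $3\le i\le k_0-2$; $Y_{k_0-1}^\circ=\frac{(k_0-1)!}{\mu^{k_0-2}-\nu^{k_0-2}}\Big(K-\sum_{i=k_0}^\infty\beta_i\Big)$; $Y_i^\circ=1$ for $i\ge k_0$; $Y_1^\circ,Y_2^\circ$ are the unique solution of the two gain equations of (DS) (with the given $Y_0$ and these $Y_i^\circ$, $i\ge3$); $e_1^\circ Y_1^\circ$ is determined by the two error equations of (DS) (which then force $e_2^\circ Y_2^\circ=0$), and $e_2^\circ=0$. Assume $Y_1^\circ>0$, that this configuration lies in $S$, and that $0<e_1^\circ\le 1/2$. Then for every $(Y_i,e_i)_{i\ge1}\in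 S$, $$Y_1\big[1-h(e_1)\big]\ \ge\ Y_1^\circ\big[1-h(e_1^\circ)\big],$$ i.e. $(Y_i^\circ,e_i^\circ)$ minimizes $Y_1[1-h(e_1)]$ over $S$.
   Context: $h(x)=-x\log_2 x-(1-x)\log_2(1-x)$ is the binary entropy function on $[0,1]$ (with $0\log_2 0=0$). For reals $\mu>\nu>0$, the decoy-state constraints (DS) on sequences $(Y_i)_{i\ge0},(e_i)_{i\ge0}$ with values in $[0,1]$ are $$Q_\mu=\sum_{i=0}^\infty \frac{\mu^i e^{-\mu}}{i!}Y_i,\quad Q_\nu=\sum_{i=0}^\infty \frac{\nu^i e^{-\nu}}{i!}Y_i,\quad E_\mu Q_\mu=\sum_{i=0}^\infty \frac{\mu^i e^{-\mu}}{i!}Y_ie_i,\quad E_\nu Q_\nu=\sum_{i=0}^\infty \frac{\nu^i e^{-\nu}}{i!}Y_ie_i$$ (the first two are the ''gain equations'', the last two the ''error equations''). *)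

(* Defs.v *)
From Stdlib Require Import Reals Lra.
From Coquelicot Require Import Coquelicot.
Open Scope R_scope.

(* binary entropy h(x) = -x log2 x - (1-x) log2 (1-x); at x = 0 or 1 the
   factor 0 kills whatever value ln 0 has, so 0 log2 0 = 0 automatically. *)
Definition h (x : R) : R :=
  - x * (ln x / ln 2) - (1 - x) * (ln (1 - x) / ln 2).

Definition pois (m : R) (i : nat) : R := m ^ i * exp (- m) / INR (Stdlib.Arith.Factorial.fact i).

Definition DS (mu nu Qmu Qnu Emu Enu : R) (Y e : nat -> R) : Prop :=
  is_series (fun i => pois mu i * Y i) Qmu /\
  is_series (fun i => pois nu i * Y i) Qnu /\
  is_series (fun i => pois mu i * Y i * e i) (Emu * Qmu) /\
  is_series (fun i => pois nu i * Y i * e i) (Enu * Qnu).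

Definition inS (mu nu Qmu Qnu Emu Enu Y0 : R) (Y e : nat -> R) : Prop :=
  Y 0%nat = Y0 /\ e 0%nat = 1 / 2 /\
  (forall i, (1 <= i)%nat -> 0 <= Y i <= 1 /\ 0 <= e i <= 1) /\
  DS mu nu Qmu Qnu Emu Enu Y e.

Definition Kconst (mu nu Qmu Qnu Emu Enu Y0 : R) : R :=
  / mu * exp mu * (Emu * Qmu) - / nu * exp nu * (Enu * Qnu)
  + (mu - nu) / (2 * mu * nu) * Y0.

Definition beta (mu nu : R) (i : nat) : R :=
  (mu ^ (i - 1) - nu ^ (i - 1)) / INR (Stdlib.Arith.Factorial.fact i).

Definition beta_tail (mu nu : R) (k : nat) : R :=
  Series (fun n => beta mu nu (n + k)).

(* Main.v *)
Require Import Defs.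
From Stdlib Require Import Reals Lra Lia.
From Coquelicot Require Import Coquelicot.
Open Scope R_scope.

Lemma ser_lin (a b : nat->R) la lb k : is_series a la -> is_series b lb ->
  is_series (fun n => k*(a n - b n)) (k*(la-lb)).
Proof. intros Ha Hb. exact (is_series_scal k _ _ (is_series_minus _ _ _ _ Ha Hb)). Qed.

Lemma ser_add (a b : nat->R) la lb : is_series a la -> is_series b lb ->
  is_series (fun n => a n + b n) (la+lb).
Proof. intros Ha Hb. exact (is_series_plus _ _ _ _ Ha Hb). Qed.

Lemma ser_tail (a : nat -> R) : is_series a 0 -> (forall n, 0 <= a (S (S n))) -> a 0%nat + a 1%nat <= 0.
Proof. intros H Hp.
  assert (H1 : is_series (fun k => a (S k)) (- a 0%nat)).
  { apply is_series_incr_1. match goal with |- is_series _ ?l => replace l with 0 by (unfold plus; simpl; ring) end; exact H. }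
  assert (H2 : is_series (fun k => a (S (S k))) (- a 0%nat - a 1%nat)).
  { apply (is_series_incr_1 (fun k => a (S k))). match goal with |- is_series _ ?l => replace l with (- a 0%nat) by (unfold plus; simpl; ring) end; exact H1. }
  assert (0 <= Series (fun k => a (S (S k)))).
  { assert (Z : Series (fun k => 0 * a k) = 0) by (rewrite Series_scal_l; ring).
    rewrite <- Z. apply Series_le. intros; split; [lra| rewrite Rmult_0_l; apply Hp]. eexists; exact H2. }
  rewrite (is_series_unique _ _ H2) in H0. lra. Qed.

Lemma ln2_pos : 0 < ln 2.
Proof. rewrite <- ln_1. apply ln_increasing; lra. Qed.

Lemma xlnx_tan x c : 0 < c -> 0 <= x -> x * ln x >= c * ln c + (1 + ln c) * (x - c).
Proof. intros Hc Hx. destruct (Req_dec x 0) as [->|Hx0].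
  - rewrite Rmult_0_l. assert (c*ln c + (1+ln c)*(0-c) = -c) by ring. lra.
  - assert (Hxp : 0 < x) by lra.
    assert (E := exp_ineq1_le (ln (c / x))).
    rewrite exp_ln in E by (apply Rdiv_lt_0_compat; lra).
    unfold Rdiv in E. rewrite ln_mult in E by (try apply Rinv_0_lt_compat; lra).
    rewrite ln_Rinv in E by lra.
    assert (x * (1 + (ln c + - ln x)) <= x * (c * / x)) by (apply Rmult_le_compat_l; lra).
    replace (x * (c * / x)) with c in H by (field; lra). nra.
Qed.

Lemma pow_strict a b p : 0 <= b < a -> (1 <= p)%nat -> b ^ p < a ^ p.
Proof. intros Hab Hp. induction p as [|p IH]; [lia|].
  destruct p as [|p]. simpl; lra.
  assert (b ^ S p < a ^ S p) by (apply IH; lia).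
  assert (0 <= b ^ S p) by (apply pow_le; lra).
  change (b * b ^ S p < a * a ^ S p). nra. Qed.

Theorem theorem1 (mu nu Qmu Qnu Emu Enu Y0 : R) (k0 : nat) (Yc ec : nat -> R) :
  0 < nu -> nu < mu ->
  0 <= Y0 <= 1 ->
  0 <= Kconst mu nu Qmu Qnu Emu Enu Y0 ->
  Kconst mu nu Qmu Qnu Emu Enu Y0 < beta_tail mu nu 3 ->
  (* k0 = smallest integer >= 3 with tail sum <= K *)
  (3 <= k0)%nat ->
  beta_tail mu nu k0 <= Kconst mu nu Qmu Qnu Emu Enu Y0 ->
  (forall k, (3 <= k)%nat -> (k < k0)%nat ->
     Kconst mu nu Qmu Qnu Emu Enu Y0 < beta_tail mu nu k) ->
  (4 <= k0)%nat ->
  (* definition of the configuration (Yc, ec) *)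
  (forall i, (3 <= i)%nat -> ec i = 1) ->
  (forall i, (3 <= i)%nat -> (i <= k0 - 2)%nat -> Yc i = 0) ->
  Yc (k0 - 1)%nat =
    INR (Stdlib.Arith.Factorial.fact (k0 - 1)) / (mu ^ (k0 - 2) - nu ^ (k0 - 2))
    * (Kconst mu nu Qmu Qnu Emu Enu Y0 - beta_tail mu nu k0) ->
  (forall i, (k0 <= i)%nat -> Yc i = 1) ->
  ec 2%nat = 0 ->
  (* Yc 1, Yc 2 solve the gain equations, ec 1 * Yc 1 the error equations,
     and the configuration lies in S *)
  inS mu nu Qmu Qnu Emu Enu Y0 Yc ec ->
  0 < Yc 1%nat ->
  0 < ec 1%nat <= 1 / 2 ->
  forall Y e : nat -> R,
    inS mu nu Qmu Qnu Emu Enu Y0 Y e ->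
    Y 1%nat * (1 - h (e 1%nat)) >= Yc 1%nat * (1 - h (ec 1%nat)).
Proof.
  intros Hnu Hmu HY0 _ _ _ _ _ Hk0 Hec3 HYcl _ HYch Hec2 HSc HYc1 Hec1 Y e HS.
  destruct HSc as [Yc0 [ec0 [Bc [Gc1 [Gc2 [Ec1 Ec2]]]]]].
  destruct HS as [Y0e [e0 [B [G1 [G2 [E1 E2]]]]]].
  set (c := ec 1%nat) in *.
  set (l2 := ln 2).
  assert (Hl2 : 0 < l2) by apply ln2_pos.
  set (al := 1 + ln (1 - c) / l2).
  set (ga := (ln (1 - c) - ln c) / l2).
  set (de := ga - al).
  assert (Hlh : ln (/ 2) = - l2) by (apply ln_Rinv; lra).
  assert (Hal : 0 <= al).
  { assert (ln (/2) <= ln (1 - c)) by (apply ln_le; lra).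
    unfold al. replace (1 + ln (1 - c) / l2) with ((l2 + ln (1 - c)) * / l2) by (field; lra).
    apply Rmult_le_pos; [lra| left; apply Rinv_0_lt_compat; lra]. }
  assert (Hde : 0 <= de).
  { assert (ln c <= ln (/2)) by (apply ln_le; lra).
    unfold de, ga, al. replace ((ln (1 - c) - ln c) / l2 - (1 + ln (1 - c) / l2)) with ((- ln c - l2) * / l2) by (field; lra).
    apply Rmult_le_pos; [lra| left; apply Rinv_0_lt_compat; lra]. }
  set (p := (k0 - 2)%nat).
  set (X := mu ^ p). set (Z := nu ^ p).
  assert (HXZ : Z < X) by (apply pow_strict; [lra | unfold p; lia]).
  set (la := al * mu / (mu - nu) + de * X / (X - Z)).
  set (k1 := al * nu * exp mu / (mu * (mu - nu))).
  set (k2 := - (al * mu * exp nu / (nu * (mu - nu)))).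
  set (k3 := (ga - la) * exp mu / mu).
  set (k4 := la * exp nu / nu).
  set (t := fun n => k1 * (pois mu n * Y n - pois mu n * Yc n) + k2 * (pois nu n * Y n - pois nu n * Yc n)
     + k3 * (pois mu n * Y n * e n - pois mu n * Yc n * ec n) + k4 * (pois nu n * Y n * e n - pois nu n * Yc n * ec n)).
  assert (Ht : is_series t 0).
  { assert (H := ser_add _ _ _ _ (ser_add _ _ _ _ (ser_add _ _ _ _ (ser_lin _ _ _ _ k1 G1 Gc1) (ser_lin _ _ _ _ k2 G2 Gc2))
       (ser_lin _ _ _ _ k3 E1 Ec1)) (ser_lin _ _ _ _ k4 E2 Ec2)).
    match type of H with is_series _ ?l => replace l with 0 in H by ring end. exact H. }
  assert (Hexp : forall m, exp (- m) * exp m = 1).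
  { intro m. rewrite exp_Ropp. field. apply Rgt_not_eq, exp_pos. }
  assert (Hem := exp_pos mu). assert (Hen := exp_pos nu).
  assert (Htail := ser_tail t Ht).
  assert (Ht0 : t 0%nat = 0).
  { unfold t. rewrite Y0e, Yc0, e0, ec0. ring. }
  assert (Ht1 : t 1%nat = - al * (Y 1%nat - Yc 1%nat) + ga * (Y 1%nat * e 1%nat - Yc 1%nat * c)).
  { unfold t, pois, k1, k2, k3, k4, la. fold c. simpl. rewrite !exp_Ropp. field.
    repeat split; try lra; apply Rgt_not_eq; lra. }
  assert (Hpos : forall n, 0 <= t (S (S n))).
  { intro n.
    set (F := INR (Factorial.fact (S (S n)))).
    assert (HF : 0 < F) by apply INR_fact_lt_0.
    set (Ac := al * (nu * mu ^ S n - mu * nu ^ S n) / ((mu - nu) * F)).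
    set (W := X * nu ^ S n - mu ^ S n * Z).
    set (Dn := Y (S (S n)) * e (S (S n)) - Yc (S (S n)) * ec (S (S n))).
    set (Gn := Y (S (S n)) - Yc (S (S n))).
    assert (Eq : t (S (S n)) = Ac * (Gn - Dn) + de / ((X - Z) * F) * (W * Dn)).
    { unfold t, pois, k1, k2, k3, k4, la, Ac, W, Dn, Gn, de. fold F.
      replace (mu ^ S (S n)) with (mu * mu ^ S n) by reflexivity.
      replace (nu ^ S (S n)) with (nu * nu ^ S n) by reflexivity.
      rewrite !exp_Ropp. field. repeat split; try lra; apply Rgt_not_eq; lra. }
    rewrite Eq. apply Rplus_le_le_0_compat.
    - destruct n as [|n].
      + unfold Ac. simpl. replace (nu * (mu * 1) - mu * (nu * 1)) with 0 by ring. unfold Rdiv. lra.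
      + apply Rmult_le_pos.
        * unfold Ac. apply Rmult_le_pos.
          -- apply Rmult_le_pos; [lra|]. simpl.
             assert (nu ^ n <= mu ^ n) by (apply pow_incr; lra).
             assert (0 <= nu ^ n) by (apply pow_le; lra).
             assert (nu * nu ^ n <= mu * mu ^ n) by (apply Rmult_le_compat; lra).
             replace (nu * (mu * (mu * mu ^ n)) - mu * (nu * (nu * nu ^ n))) with ((mu * nu) * (mu * mu ^ n - nu * nu ^ n)) by ring.
             apply Rmult_le_pos; nra.
          -- left. apply Rinv_0_lt_compat. apply Rmult_lt_0_compat; lra.
        * unfold Gn, Dn. rewrite (Hec3 (S (S (S n)))) by lia.
          destruct (B (S (S (S n)))) as [[? ?] [? ?]]; [lia|]. nra.
    - apply Rmult_le_pos.
      + unfold Rdiv. apply Rmult_le_pos; [lra|]. left. apply Rinv_0_lt_compat. apply Rmult_lt_0_compat; lra.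
      + destruct (B (S (S n))) as [[HYa HYb] [Hea Heb]]; [lia|].
        destruct (Compare_dec.lt_eq_lt_dec (S n) p) as [[Hlt|Heq]|Hgt].
        * destruct (Nat.le_exists_sub (S n) p) as [d [Hd _]]; [lia|].
          assert (HW : 0 <= W).
          { unfold W, X, Z. rewrite Hd, !pow_add.
            assert (nu ^ d <= mu ^ d) by (apply pow_incr; lra).
            assert (0 <= nu ^ S n) by (apply pow_le; lra).
            assert (0 <= mu ^ S n) by (apply pow_le; lra).
            assert (0 <= mu ^ S n * nu ^ S n) by (apply Rmult_le_pos; lra).
            replace (mu ^ d * mu ^ S n * nu ^ S n - mu ^ S n * (nu ^ d * nu ^ S n))
              with ((mu ^ S n * nu ^ S n) * (mu ^ d - nu ^ d)) by ring.
            apply Rmult_le_pos; lra. }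
          assert (HD : 0 <= Dn).
          { unfold Dn. destruct n as [|n].
            - rewrite Hec2. rewrite Rmult_0_r. nra.
            - rewrite (HYcl (S (S (S n)))) by (unfold p in Hlt; lia). nra. }
          apply Rmult_le_pos; lra.
        * assert (W = 0) by (unfold W, X, Z; rewrite Heq; ring). rewrite H. lra.
        * destruct (Nat.le_exists_sub p (S n)) as [d [Hd _]]; [lia|].
          assert (HW : W <= 0).
          { unfold W, X, Z. rewrite Hd, !pow_add.
            assert (nu ^ d <= mu ^ d) by (apply pow_incr; lra).
            assert (0 <= nu ^ p) by (apply pow_le; lra).
            assert (0 <= mu ^ p) by (apply pow_le; lra).
            assert (0 <= mu ^ p * nu ^ p) by (apply Rmult_le_pos; lra).
            replace (mu ^ p * (nu ^ d * nu ^ p) - mu ^ d * mu ^ p * nu ^ p)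
              with ((mu ^ p * nu ^ p) * (nu ^ d - mu ^ d)) by ring.
            nra. }
          assert (HD : Dn <= 0).
          { unfold Dn. rewrite (HYch (S (S n))) by (unfold p in Hgt; lia).
            rewrite (Hec3 (S (S n))) by lia. nra. }
          nra. }
  assert (Hkey : al * (Y 1%nat - Yc 1%nat) - ga * (Y 1%nat * e 1%nat - Yc 1%nat * c) >= 0).
  { specialize (Htail Hpos). rewrite Ht0, Ht1 in Htail. lra. }
  destruct (B 1%nat) as [[HY1a HY1b] [He1a He1b]]; [lia|].
  assert (Htan : 1 - h (e 1%nat) >= 1 - h c - ga * (e 1%nat - c)).
  { assert (T1 := xlnx_tan (e 1%nat) c ltac:(lra) ltac:(lra)).
    assert (T2 := xlnx_tan (1 - e 1%nat) (1 - c) ltac:(lra) ltac:(lra)).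
    assert (Eq : 1 - h (e 1%nat) - (1 - h c - ga * (e 1%nat - c)) =
      (e 1%nat * ln (e 1%nat) + (1 - e 1%nat) * ln (1 - e 1%nat)
       - (c * ln c + (1 + ln c) * (e 1%nat - c))
       - ((1 - c) * ln (1 - c) + (1 + ln (1 - c)) * ((1 - e 1%nat) - (1 - c)))) * / l2).
    { unfold h, ga. fold l2. field. lra. }
    assert (0 <= (e 1%nat * ln (e 1%nat) + (1 - e 1%nat) * ln (1 - e 1%nat)
       - (c * ln c + (1 + ln c) * (e 1%nat - c))
       - ((1 - c) * ln (1 - c) + (1 + ln (1 - c)) * ((1 - e 1%nat) - (1 - c)))) * / l2).
    { apply Rmult_le_pos; [lra| left; apply Rinv_0_lt_compat; lra]. }
    lra. }
  assert (Hhc : 1 - h c = al - ga * c).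
  { unfold h, al, ga. fold l2. field. lra. }
  rewrite Hhc in Htan |- *.
  assert (Y 1%nat * (1 - h (e 1%nat)) >= Y 1%nat * (al - ga * c - ga * (e 1%nat - c))) by
    (apply Rle_ge, Rmult_le_compat_l; lra).
  nra.
Qed.
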